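(* Deciding whether a normal finitely recursive program $P$ skeptically entails a ground formula $F$ is r.e.-hard.
   Context: A normal program is a finite set of rules $A\leftarrow L_1,\dots,L_n$ ($n\ge0$), $A$ an atom, $L_i$ atoms or negated atoms $\mathtt{not}\,B$, possibly with function symbols. $\mathsf{Ground}(P)$ is its ground instantiation. For a set $M$ of ground atoms, $P^M$ is obtained from $\mathsf{Ground}(P)$ by deleting rules having some $\mathtt{not}\,B$ in the body with $B\in M$ and deleting negative literals from the remaining rules; $M$ is a stable model iff $M$ is the least Herbrand model of $P^M$. A ground formula is a closed propositional combination of ground atoms; $P$ skeptically entails $F$ iff $F$ is true in every stable model of $P$. The dependency graph has ground atoms as vertices and an edge $A\to B$ whenever some $r\in\mathsf{Ground}(P)$ has head $A$ and $B$ occurring in its body; $A$ depends on $B$ if there is a directed path from $A$ to $B$ (every atom depends on itself). $P$ is finitely recursive iff each ground atom depends on finitely many ground atoms. r.e.-hard means every recursively enumerable set is many-one reducible to the set of pairs $(P,F)$ with $P$ normal finitely recursive skeptically entailing $F$. *)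

(* Defs.v *)
From Stdlib Require Import List Arith Relations.
Import ListNotations.

(* Terms: variables and function symbols (name, arity = number of args);
   constants are Fun c []. *)
Inductive term : Type :=
| Var : nat -> term
| Fun : nat -> list term -> term.

Record atom : Type := mkAtom { apred : nat; aargs : list term }.

Inductive literal : Type :=
| Pos : atom -> literal
| Neg : atom -> literal.

Record rule : Type := mkRule { rhead : atom; rbody : list literal }.

Definition program := list rule.

Inductive formula : Type :=
| FAtom : atom -> formula
| FNot : formula -> formula
| FAnd : formula -> formula -> formula
| FOr : formula -> formula -> formula
| FImp : formula -> formula -> formula.

Fixpoint ground_term (t : term) : Prop :=
  match t with
  | Var _ => False
  | Fun _ ts => (fix all (l : list term) : Prop :=
                   match l with [] => True | u :: l' => ground_term u /\ all l' end) ts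
  end.

Definition ground_atom (a : atom) : Prop := forall t, In t (aargs a) -> ground_term t.

Fixpoint ground_formula (F : formula) : Prop :=
  match F with
  | FAtom a => ground_atom a
  | FNot G => ground_formula G
  | FAnd G H | FOr G H | FImp G H => ground_formula G /\ ground_formula H
  end.

Fixpoint subst_term (s : nat -> term) (t : term) : term :=
  match t with
  | Var x => s x
  | Fun f ts => Fun f (map (subst_term s) ts)
  end.

Definition subst_atom (s : nat -> term) (a : atom) : atom :=
  mkAtom (apred a) (map (subst_term s) (aargs a)).

Definition subst_lit (s : nat -> term) (l : literal) : literal :=
  match l with Pos a => Pos (subst_atom s a) | Neg a => Neg (subst_atom s a) end.

Definition subst_rule (s : nat -> term) (r : rule) : rule :=
  mkRule (subst_atom s (rhead r)) (map (subst_lit s) (rbody r)).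

Fixpoint funs_term (t : term) : list (nat * nat) :=
  match t with
  | Var _ => []
  | Fun f ts => (f, length ts) :: flat_map funs_term ts
  end.

Definition funs_atom (a : atom) : list (nat * nat) := flat_map funs_term (aargs a).
Definition lit_atom (l : literal) : atom := match l with Pos a => a | Neg a => a end.
Definition funs_rule (r : rule) : list (nat * nat) :=
  funs_atom (rhead r) ++ flat_map (fun l => funs_atom (lit_atom l)) (rbody r).
Definition funs_prog (P : program) : list (nat * nat) := flat_map funs_rule P.

(* Language of P: its function symbols, plus one constant (0, arity 0)
   if P contains no constant (standard convention). *)
Definition signature (P : program) : list (nat * nat) :=
  if existsb (fun p => Nat.eqb (snd p) 0) (funs_prog P)
  then funs_prog P else (0, 0) :: funs_prog P.

Fixpoint in_HU (sg : list (nat * nat)) (t : term) : Prop :=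
  match t with
  | Var _ => False
  | Fun f ts => In (f, length ts) sg /\
      (fix all (l : list term) : Prop :=
         match l with [] => True | u :: l' => in_HU sg u /\ all l' end) ts
  end.

Definition ground_rule_of (P : program) (gr : rule) : Prop :=
  exists r s, In r P /\ (forall x, in_HU (signature P) (s x)) /\ gr = subst_rule s r.

Definition interp := atom -> Prop.

(* S is closed under the rules of the reduct P^M *)
Definition reduct_closed (P : program) (M S : interp) : Prop :=
  forall gr, ground_rule_of P gr ->
    (forall B, In (Neg B) (rbody gr) -> ~ M B) ->
    (forall B, In (Pos B) (rbody gr) -> S B) ->
    S (rhead gr).

Definition least_model_reduct (P : program) (M : interp) : interp :=
  fun a => forall S, reduct_closed P M S -> S a.

Definition stable_model (P : program) (M : interp) : Prop :=
  forall a, M a <-> least_model_reduct P M a.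

Fixpoint holds (M : interp) (F : formula) : Prop :=
  match F with
  | FAtom a => M a
  | FNot G => ~ holds M G
  | FAnd G H => holds M G /\ holds M H
  | FOr G H => holds M G \/ holds M H
  | FImp G H => holds M G -> holds M H
  end.

Definition skeptically_entails (P : program) (F : formula) : Prop :=
  forall M, stable_model P M -> holds M F.

Definition dep_edge (P : program) (A B : atom) : Prop :=
  exists gr, ground_rule_of P gr /\ rhead gr = A /\ In B (map lit_atom (rbody gr)).

Definition depends (P : program) : atom -> atom -> Prop := clos_refl_trans atom (dep_edge P).

Definition finitely_recursive (P : program) : Prop :=
  forall A, ground_atom A -> exists l : list atom, forall B, depends P A B -> In B l.

Definition FR_skeptical (x : program * formula) : Prop :=
  finitely_recursive (fst x) /\ ground_formula (snd x) /\ skeptically_entails (fst x) (snd x).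

Inductive mu_rec : Type :=
| MZero : mu_rec
| MSucc : mu_rec
| MProj : nat -> mu_rec
| MComp : mu_rec -> list mu_rec -> mu_rec
| MRec : mu_rec -> mu_rec -> mu_rec    (* primitive recursion on the first argument *)
| MMin : mu_rec -> mu_rec.             (* unbounded minimisation on the first argument *)

Inductive eval : mu_rec -> list nat -> nat -> Prop :=
| ev_zero v : eval MZero v 0
| ev_succ v : eval MSucc v (S (hd 0 v))
| ev_proj i v : eval (MProj i) v (nth i v 0)
| ev_comp f gs v ys z : evals gs v ys -> eval f ys z -> eval (MComp f gs) v z
| ev_rec0 f g v y : eval f v y -> eval (MRec f g) (0 :: v) y
| ev_recS f g n v r y : eval (MRec f g) (n :: v) r -> eval g (n :: r :: v) y ->
    eval (MRec f g) (S n :: v) y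
| ev_min f v n : eval f (n :: v) 0 ->
    (forall m, m < n -> exists k, k <> 0 /\ eval f (m :: v) k) ->
    eval (MMin f) v n
with evals : list mu_rec -> list nat -> list nat -> Prop :=
| evs_nil v : evals [] v []
| evs_cons g gs v y ys : eval g v y -> evals gs v ys -> evals (g :: gs) v (y :: ys).

Definition re_set (A : nat -> Prop) : Prop :=
  exists c : mu_rec, forall n, A n <-> exists y, eval c [n] y.

Definition cpair (x y : nat) : nat := (x + y) * (x + y + 1) / 2 + y.

Fixpoint enc_list (l : list nat) : nat :=
  match l with [] => 0 | x :: l' => S (cpair x (enc_list l')) end.

Fixpoint enc_term (t : term) : nat :=
  match t with
  | Var x => cpair 0 x
  | Fun f ts => cpair 1 (cpair f (enc_list (map enc_term ts)))
  end.

Definition enc_atom (a : atom) : nat := cpair (apred a) (enc_list (map enc_term (aargs a))).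
Definition enc_lit (l : literal) : nat :=
  match l with Pos a => cpair 0 (enc_atom a) | Neg a => cpair 1 (enc_atom a) end.
Definition enc_rule (r : rule) : nat := cpair (enc_atom (rhead r)) (enc_list (map enc_lit (rbody r))).
Definition enc_program (P : program) : nat := enc_list (map enc_rule P).

Fixpoint enc_formula (F : formula) : nat :=
  match F with
  | FAtom a => cpair 0 (enc_atom a)
  | FNot G => cpair 1 (enc_formula G)
  | FAnd G H => cpair 2 (cpair (enc_formula G) (enc_formula H))
  | FOr G H => cpair 3 (cpair (enc_formula G) (enc_formula H))
  | FImp G H => cpair 4 (cpair (enc_formula G) (enc_formula H))
  end.

Definition enc_instance (x : program * formula) : nat :=
  cpair (enc_program (fst x)) (enc_formula (snd x)).

Definition many_one_reducible (A : nat -> Prop) (B : program * formula -> Prop) : Prop :=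
  exists f : nat -> program * formula,
    (exists c : mu_rec, forall n, eval c [n] (enc_instance (f n))) /\
    (forall n, A n <-> B (f n)).

(* Main.v *)
Require Import Defs.
From Stdlib Require Import List Arith Lia Relations Classical.
Import ListNotations.

Definition tz := Fun 0 [].
Definition ts t := Fun 1 [t].
Definition tnil := Fun 2 [].
Definition tcons a b := Fun 3 [a; b].
Definition node c v y k := Fun 10 [c; v; y; k].
Definition Ad t := mkAtom 0 [t].
Definition Ads gs v ys tr := mkAtom 1 [gs; v; ys; tr].
Definition Anth i v x := mkAtom 2 [i; v; x].
Definition Amins f v n ms := mkAtom 3 [f; v; n; ms].
Definition Ap t := mkAtom 4 [t].

Fixpoint tlist (l : list term) : term :=
  match l with [] => tnil | x :: l' => tcons x (tlist l') end.
Fixpoint encn (n : nat) : term := match n with 0 => tz | S n => ts (encn n) end.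
Definition encl (v : list nat) : term := tlist (map encn v).
Fixpoint encc (c : mu_rec) : term :=
  match c with
  | MZero => Fun 4 []
  | MSucc => Fun 5 []
  | MProj i => Fun 6 [encn i]
  | MComp f gs => Fun 7 [encc f; tlist (map encc gs)]
  | MRec f g => Fun 8 [encc f; encc g]
  | MMin f => Fun 9 [encc f]
  end.

Fixpoint decn (t : term) : nat := match t with Fun 1 [u] => S (decn u) | _ => 0 end.
Fixpoint decl (t : term) : list nat := match t with Fun 3 [x; l] => decn x :: decl l | _ => [] end.
Fixpoint decc (t : term) : mu_rec :=
  match t with
  | Fun 4 [] => MZero
  | Fun 5 [] => MSucc
  | Fun 6 [i] => MProj (decn i)
  | Fun 7 [f; gs] => MComp (decc f) (decls gs)
  | Fun 8 [f; g] => MRec (decc f) (decc g)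
  | Fun 9 [f] => MMin (decc f)
  | _ => MZero
  end
with decls (t : term) : list mu_rec :=
  match t with Fun 3 [g; gs] => decc g :: decls gs | _ => [] end.

Lemma decn_encn n : decn (encn n) = n.
Proof. induction n; simpl; auto. Qed.
Lemma decl_encl v : decl (encl v) = v.
Proof. induction v; simpl; auto. unfold encl in IHv. rewrite IHv, decn_encn. auto. Qed.

Section MuInd.
Variable P : mu_rec -> Prop.
Hypotheses (H0 : P MZero) (H1 : P MSucc) (H2 : forall i, P (MProj i))
  (H3 : forall f gs, P f -> Forall P gs -> P (MComp f gs))
  (H4 : forall f g, P f -> P g -> P (MRec f g)) (H5 : forall f, P f -> P (MMin f)).
Fixpoint mu_ind' (c : mu_rec) : P c :=
  match c with
  | MZero => H0 | MSucc => H1 | MProj i => H2 i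
  | MComp f gs => H3 f gs (mu_ind' f)
      ((fix go (l : list mu_rec) : Forall P l :=
         match l with [] => Forall_nil _ | x :: l' => Forall_cons _ (mu_ind' x) (go l') end) gs)
  | MRec f g => H4 f g (mu_ind' f) (mu_ind' g)
  | MMin f => H5 f (mu_ind' f)
  end.
End MuInd.

Section TermInd.
Variable P : term -> Prop.
Hypotheses (H0 : forall x, P (Var x)) (H1 : forall f ts, Forall P ts -> P (Fun f ts)).
Fixpoint term_ind' (t : term) : P t :=
  match t with
  | Var x => H0 x
  | Fun f ts => H1 f ts
      ((fix go (l : list term) : Forall P l :=
         match l with [] => Forall_nil _ | x :: l' => Forall_cons _ (term_ind' x) (go l') end) ts)
  end.
End TermInd.

Lemma decc_encc c : decc (encc c) = c.
Proof.
  induction c using mu_ind'; simpl; try rewrite decn_encn; try congruence.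
  f_equal; auto. induction H; simpl; auto. f_equal; auto.
Qed.

Lemma subst_encn s n : subst_term s (encn n) = encn n.
Proof. induction n; simpl; auto. unfold ts. simpl. rewrite IHn. auto. Qed.
Lemma subst_encc s c : subst_term s (encc c) = encc c.
Proof.
  induction c using mu_ind'; simpl; try rewrite subst_encn; try congruence.
  rewrite IHc. f_equal. f_equal. f_equal. induction H; simpl; auto.
  unfold tcons; simpl. rewrite H, IHForall. auto.
Qed.

Notation V := Var.
Definition R1 := mkRule (Ad (node (Fun 4 []) (V 0) tz tnil)) [].
Definition R2 := mkRule (Ad (node (Fun 5 []) (tcons (V 0) (V 1)) (ts (V 0)) tnil)) [].
Definition R3 := mkRule (Ad (node (Fun 5 []) tnil (ts tz) tnil)) [].
Definition R4 := mkRule (Ad (node (Fun 6 [V 0]) (V 1) (V 2) tnil)) [Pos (Anth (V 0) (V 1) (V 2))].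
Definition R5 := mkRule (Anth tz (tcons (V 0) (V 1)) (V 0)) [].
Definition R6 := mkRule (Anth (ts (V 0)) (tcons (V 1) (V 2)) (V 3)) [Pos (Anth (V 0) (V 2) (V 3))].
Definition R7 := mkRule (Anth (V 0) tnil tz) [].
Definition R8 := mkRule (Ad (node (Fun 7 [V 0; V 1]) (V 2) (V 3) (tcons (node (V 0) (V 4) (V 3) (V 5)) (V 6))))
  [Pos (Ad (node (V 0) (V 4) (V 3) (V 5))); Pos (Ads (V 1) (V 2) (V 4) (V 6))].
Definition R9 := mkRule (Ads tnil (V 0) tnil tnil) [].
Definition R10 := mkRule (Ads (tcons (V 0) (V 1)) (V 2) (tcons (V 3) (V 4)) (tcons (node (V 0) (V 2) (V 3) (V 5)) (V 6)))
  [Pos (Ad (node (V 0) (V 2) (V 3) (V 5))); Pos (Ads (V 1) (V 2) (V 4) (V 6))].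
Definition R11 := mkRule (Ad (node (Fun 8 [V 0; V 1]) (tcons tz (V 2)) (V 3) (tcons (node (V 0) (V 2) (V 3) (V 4)) tnil)))
  [Pos (Ad (node (V 0) (V 2) (V 3) (V 4)))].
Definition R12 := mkRule (Ad (node (Fun 8 [V 0; V 1]) (tcons (ts (V 2)) (V 3)) (V 4)
    (tcons (node (Fun 8 [V 0; V 1]) (tcons (V 2) (V 3)) (V 5) (V 6))
      (tcons (node (V 1) (tcons (V 2) (tcons (V 5) (V 3))) (V 4) (V 7)) tnil))))
  [Pos (Ad (node (Fun 8 [V 0; V 1]) (tcons (V 2) (V 3)) (V 5) (V 6)));
   Pos (Ad (node (V 1) (tcons (V 2) (tcons (V 5) (V 3))) (V 4) (V 7)))].
Definition R13 := mkRule (Ad (node (Fun 9 [V 0]) (V 1) (V 2) (tcons (node (V 0) (tcons (V 2) (V 1)) tz (V 3)) (V 4))))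
  [Pos (Ad (node (V 0) (tcons (V 2) (V 1)) tz (V 3))); Pos (Amins (V 0) (V 1) (V 2) (V 4))].
Definition R14 := mkRule (Amins (V 0) (V 1) tz tnil) [].
Definition R15 := mkRule (Amins (V 0) (V 1) (ts (V 2)) (tcons (node (V 0) (tcons (V 2) (V 1)) (ts (V 3)) (V 4)) (V 5)))
  [Pos (Ad (node (V 0) (tcons (V 2) (V 1)) (ts (V 3)) (V 4))); Pos (Amins (V 0) (V 1) (V 2) (V 5))].
Definition Pfixed : program := [R1;R2;R3;R4;R5;R6;R7;R8;R9;R10;R11;R12;R13;R14;R15].

Definition rootT (cc hole : term) := node cc (tcons hole tnil) (V 0) (V 1).
Definition rpT (cc hole : term) := mkRule (Ap (rootT cc hole)) [Neg (Ap (rootT cc hole)); Pos (Ad (rootT cc hole))].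
Definition P0 c := rpT (encc c) (V 99) :: Pfixed.
Definition sig (n : nat) (x : nat) : term := if Nat.eqb x 99 then encn n else Var x.
Definition prog c n := map (subst_rule (sig n)) (P0 c).
Definition rp c n := rpT (encc c) (encn n).
Definition Pc c n := rp c n :: Pfixed.

Lemma prog_eq c n : prog c n = Pc c n.
Proof.
  unfold prog, P0, Pc. cbn [map]. f_equal.
  unfold rp, rpT, rootT, subst_rule, subst_lit, subst_atom, Ap, Ad, node, tcons, tnil. simpl rhead. simpl rbody.
  simpl map. simpl apred. rewrite !subst_encc. reflexivity.
Qed.

Definition sem (a : atom) : Prop :=
  match a with
  | mkAtom 0 [Fun 10 [C; Vv; Y; K]] => eval (decc C) (decl Vv) (decn Y)
  | mkAtom 1 [GS; Vv; YS; TS] => evals (decls GS) (decl Vv) (decl YS)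
  | mkAtom 2 [Ii; Vv; X] => nth (decn Ii) (decl Vv) 0 = decn X
  | mkAtom 3 [F; Vv; N; MS] => forall m, m < decn N -> exists k, k <> 0 /\ eval (decc F) (m :: decl Vv) k
  | _ => True
  end.

Definition Sgood c n (a : atom) : Prop := sem a /\ (apred a = 4 -> exists y, eval c [n] y).

Ltac getpos H :=
  first [ let h := fresh "B" in pose proof (H _ (or_introl eq_refl)) as h;
          first [ let h2 := fresh "B" in pose proof (H _ (or_intror (or_introl eq_refl))) as h2 | idtac ]
        | let h2 := fresh "B" in pose proof (H _ (or_intror (or_introl eq_refl))) as h2
        | idtac ].

Lemma sound c n M : reduct_closed (Pc c n) M (Sgood c n).
Proof.
  intros gr [r [s [Hin [_ ->]]]] Hneg Hpos.
  simpl in Hin.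
  destruct Hin as [<-|Hin]; [|repeat destruct Hin as [<-|Hin]; try contradiction];
    cbn in Hpos |- *; getpos Hpos; unfold Sgood in *; cbn in *; split; try (intros; discriminate);
    repeat match goal with H : _ /\ _ |- _ => destruct H end; auto;
    try solve [constructor; auto | econstructor; eauto].
  - intros _. rewrite subst_encc, subst_encn, decc_encc, decn_encn in *. eauto.
  - match goal with H : nth _ _ _ = _ |- _ => rewrite <- H; constructor end.
  - destruct (decn (s 0)); auto.
  - intros; lia.
  - intros m Hm. destruct (Nat.eq_dec m (decn (s 2))) as [->|Hne].
    + exists (S (decn (s 3))). split; auto.
    + match goal with H : forall m, m < decn (s 2) -> _ |- _ => apply H end. lia.
Qed.

Definition syms : list (nat * nat) := [(0,0);(1,1);(2,0);(3,2);(4,0);(5,0);(6,1);(7,2);(8,2);(9,1);(10,4)].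

Lemma sig_funs P x : In x (funs_prog P) -> In x (signature P).
Proof. unfold signature. destruct existsb; simpl; auto. Qed.

Lemma syms_in c n : forall x, In x syms -> In x (signature (Pc c n)).
Proof.
  intros x Hx. apply sig_funs. unfold Pc.
  change (funs_prog (rp c n :: Pfixed)) with (funs_rule (rp c n) ++ funs_prog Pfixed).
  apply in_or_app. right.
  simpl in Hx. repeat destruct Hx as [<-|Hx]; try contradiction;
  vm_compute; repeat (first [left; reflexivity | right]).
Qed.

Section HU.
Variable sg : list (nat * nat).
Hypothesis Hsg : forall x, In x syms -> In x sg.
Ltac sy := apply Hsg; simpl; tauto.

Lemma hu_tz : in_HU sg tz. Proof. simpl. split; auto. sy. Qed.
Lemma hu_tnil : in_HU sg tnil. Proof. simpl. split; auto. sy. Qed.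
Lemma hu_ts t : in_HU sg t -> in_HU sg (ts t). Proof. simpl. split; auto. sy. Qed.
Lemma hu_tcons a b : in_HU sg a -> in_HU sg b -> in_HU sg (tcons a b). Proof. simpl. split; auto. sy. Qed.
Lemma hu_node a b d e : in_HU sg a -> in_HU sg b -> in_HU sg d -> in_HU sg e -> in_HU sg (node a b d e).
Proof. simpl. repeat split; auto. sy. Qed.
Lemma hu_encn n : in_HU sg (encn n). Proof. induction n; simpl. apply hu_tz. apply hu_ts; auto. Qed.
Lemma hu_tlist l : Forall (in_HU sg) l -> in_HU sg (tlist l).
Proof. induction 1; simpl. apply hu_tnil. apply hu_tcons; auto. Qed.
Lemma hu_encl v : in_HU sg (encl v).
Proof. apply hu_tlist. induction v; simpl; constructor; auto using hu_encn. Qed.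
Lemma hu_encc c : in_HU sg (encc c).
Proof.
  induction c using mu_ind'; simpl; repeat split; auto; try sy; try apply hu_encn.
  apply hu_tlist. induction H; simpl; constructor; auto.
Qed.
Lemma hu_encs gs : in_HU sg (tlist (map encc gs)).
Proof. apply hu_tlist. induction gs; simpl; constructor; auto using hu_encc. Qed.
Definition sub (l : list term) (x : nat) : term := nth x l tz.
Lemma sub_hu l : Forall (in_HU sg) l -> forall x, in_HU sg (sub l x).
Proof.
  intros H i. unfold sub. revert i; induction H as [|a l Ha Hl IH]; intros [|i]; simpl; auto; exact hu_tz.
Qed.
End HU.

Definition LM := least_model_reduct.

Lemma der P M r s : In r P -> (forall x, in_HU (signature P) (s x)) ->
  (forall B, In (Neg B) (rbody (subst_rule s r)) -> ~ M B) ->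
  (forall B, In (Pos B) (rbody (subst_rule s r)) -> LM P M B) ->
  LM P M (rhead (subst_rule s r)).
Proof.
  intros Hr Hs Hn Hp S HS. apply HS; auto.
  - exists r, s. auto.
  - intros B HB. apply (Hp B HB S HS).
Qed.

Section Compl.
Variables (c0 : mu_rec) (n0 : nat) (M : interp).
Let P := Pc c0 n0.
Let sg := signature P.
Let Hsg := syms_in c0 n0.

Ltac inP := unfold P, Pc; apply in_cons; unfold Pfixed;
  repeat (first [apply in_eq | apply in_cons]).
Ltac hu := repeat (first [ assumption | apply (hu_encn sg Hsg) | apply (hu_encl sg Hsg) | apply (hu_encc sg Hsg) | apply (hu_encs sg Hsg)
  | apply (hu_tcons sg Hsg) | apply (hu_node sg Hsg) | apply (hu_tnil sg Hsg)
  | apply (hu_tz sg Hsg) | apply (hu_ts sg Hsg) ]).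
Ltac hus := apply sub_hu with (1 := Hsg); repeat (constructor; [hu|]); apply Forall_nil.
Ltac negs := let B := fresh in let HB := fresh in intros B HB; simpl in HB;
  repeat destruct HB as [HB|HB]; try discriminate; contradiction.
Ltac poss := let B := fresh in let HB := fresh in intros B HB; simpl in HB;
  repeat destruct HB as [HB|HB]; try contradiction; injection HB; intros <-; assumption.
Ltac app r l := refine (der P M r (sub l) _ _ _ _); [inP | hus | negs | poss].

Lemma nth_der i v : LM P M (Anth (encn i) (encl v) (encn (nth i v 0))).
Proof.
  revert i; induction v as [|x v IH]; intros i.
  - destruct i as [|i]; [app R7 [encn 0] | app R7 [encn (S i)]].
  - destruct i.
    + app R5 [encn x; encl v].
    + pose proof (IH i). app R6 [encn i; encn x; encl v; encn (nth i v 0)].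
Qed.

Lemma mins_der f v n :
  (forall m, m < n -> exists y K, in_HU sg K /\ LM P M (Ad (node (encc f) (tcons (encn m) (encl v)) (encn (S y)) K))) ->
  exists MS, in_HU sg MS /\ LM P M (Amins (encc f) (encl v) (encn n) MS).
Proof.
  induction n as [|n IH]; intros H.
  - exists tnil. split. hu. app R14 [encc f; encl v].
  - destruct IH as [MS [H1 H2]]. { intros; apply H; lia. }
    destruct (H n ltac:(lia)) as [y [K [H3 H4]]].
    exists (tcons (node (encc f) (tcons (encn n) (encl v)) (encn (S y)) K) MS).
    split. { hu. }
    app R15 [encc f; encl v; encn n; encn y; K; MS].
Qed.

Fixpoint compl c v y (H : eval c v y) {struct H} :
  exists K, in_HU sg K /\ LM P M (Ad (node (encc c) (encl v) (encn y) K))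
with compls gs v ys (H : evals gs v ys) {struct H} :
  exists TS, in_HU sg TS /\ LM P M (Ads (tlist (map encc gs)) (encl v) (encl ys) TS).
Proof.
  - destruct H.
    + exists tnil. split. hu. app R1 [encl v].
    + exists tnil. split. hu. destruct v as [|x v].
      * app R3 (@nil term).
      * app R2 [encn x; encl v].
    + exists tnil. split. hu. pose proof (nth_der i v).
      app R4 [encn i; encl v; encn (nth i v 0)].
    + destruct (compls _ _ _ H) as [TS [H1 H2]].
      destruct (compl _ _ _ H0) as [KF [H3 H4]].
      exists (tcons (node (encc f) (encl ys) (encn z) KF) TS). split.
      { hu. }
      app R8 [encc f; tlist (map encc gs); encl v; encn z; encl ys; KF; TS].
    + destruct (compl _ _ _ H) as [K [H1 H2]].
      exists (tcons (node (encc f) (encl v) (encn y) K) tnil). split.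
      { hu. }
      app R11 [encc f; encc g; encl v; encn y; K].
    + destruct (compl _ _ _ H) as [K1 [H1 H2]].
      destruct (compl _ _ _ H0) as [K2 [H3 H4]].
      exists (tcons (node (encc (MRec f g)) (tcons (encn n) (encl v)) (encn r) K1)
               (tcons (node (encc g) (tcons (encn n) (tcons (encn r) (encl v))) (encn y) K2) tnil)). split.
      { hu. }
      app R12 [encc f; encc g; encn n; encl v; encn y; encn r; K1; K2].
    + destruct (compl _ _ _ H) as [K0 [H1 H2]].
      destruct (mins_der f v n) as [MS [H3 H4]].
      { intros m Hm. destruct (H0 m Hm) as [k [nz e]].
        destruct (compl _ _ _ e) as [K [H5 H6]].
        destruct k as [|y]; [congruence|]. exists y, K. auto. }
      exists (tcons (node (encc f) (tcons (encn n) (encl v)) tz K0) MS). split.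
      { hu. }
      app R13 [encc f; encl v; encn n; K0; MS].
  - destruct H.
    + exists tnil. split. hu. app R9 [encl v].
    + destruct (compl _ _ _ H) as [K [H1 H2]].
      destruct (compls _ _ _ H0) as [TS [H3 H4]].
      exists (tcons (node (encc g) (encl v) (encn y) K) TS). split.
      { hu. }
      app R10 [encc g; tlist (map encc gs); encl v; encn y; encl ys; K; TS].
Qed.
End Compl.

Fixpoint subterms (t : term) : list term :=
  t :: match t with Var _ => [] | Fun _ ts => flat_map subterms ts end.

Lemma st_self t : In t (subterms t).
Proof. destruct t; simpl; auto. Qed.

Lemma st_trans u t w : In u (subterms t) -> In t (subterms w) -> In u (subterms w).
Proof.
  revert u t; induction w using term_ind'; intros u t H1 H2.
  - simpl in H2. destruct H2 as [<-|[]]. auto.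
  - simpl in H2. destruct H2 as [<-|H2]. auto.
    apply in_flat_map in H2. destruct H2 as [t' [Ht' H2]].
    rewrite Forall_forall in H. right. apply in_flat_map. exists t'. split; auto. eapply H; eauto.
Qed.

Lemma st_subst s u t : In u (subterms t) -> In (subst_term s u) (subterms (subst_term s t)).
Proof.
  revert u; induction t using term_ind'; intros u H1.
  - simpl in H1. destruct H1 as [<-|[]]. apply st_self.
  - simpl in H1. destruct H1 as [<-|H1]. apply st_self.
    apply in_flat_map in H1. destruct H1 as [t' [Ht' H2]].
    rewrite Forall_forall in H. simpl. right. apply in_flat_map. exists (subst_term s t').
    split. apply in_map; auto. apply H; auto.
Qed.

Definition rule_wf (r : rule) : Prop :=
  forall l, In l (rbody r) -> apred (lit_atom l) < 5 /\ length (aargs (lit_atom l)) < 5 /\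
    forall u, In u (aargs (lit_atom l)) -> In u (flat_map subterms (aargs (rhead r))).

Lemma wf_all c n r : In r (Pc c n) -> rule_wf r.
Proof.
  intros Hr l Hl. simpl in Hr.
  destruct Hr as [<-|Hr].
  - simpl in Hl. destruct Hl as [<-|[<-|[]]]; cbn [lit_atom Ap Ad aargs apred rhead rpT rp length];
      (split; [lia|split; [lia|]]);
      intros u [<-|[]]; cbn [flat_map]; rewrite app_nil_r; apply st_self.
  - repeat destruct Hr as [<-|Hr]; try contradiction; simpl in Hl;
    repeat destruct Hl as [<-|Hl]; try contradiction; simpl; (split; [lia|split; [lia|]]);
    intros u Hu; simpl in Hu; repeat destruct Hu as [<-|Hu]; try contradiction;
    repeat (first [left; reflexivity | right]).
Qed.

Lemma lit_subst s l : lit_atom (subst_lit s l) = subst_atom s (lit_atom l).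
Proof. destruct l; reflexivity. Qed.

Lemma edge_info P A B : (forall r, In r P -> rule_wf r) -> dep_edge P A B ->
  apred B < 5 /\ length (aargs B) < 5 /\
  forall u, In u (aargs B) -> In u (flat_map subterms (aargs A)).
Proof.
  intros Hwf [gr [[r [s [Hr [_ ->]]]] [<- HB]]].
  simpl in HB. rewrite map_map in HB. apply in_map_iff in HB. destruct HB as [l [<- Hl]].
  rewrite lit_subst. destruct (Hwf r Hr l Hl) as [H1 [H2 H3]].
  simpl. rewrite length_map. split; auto. split; auto.
  intros u Hu. apply in_map_iff in Hu. destruct Hu as [u0 [<- Hu0]].
  specialize (H3 u0 Hu0). apply in_flat_map in H3. destruct H3 as [w [Hw H3]].
  apply in_flat_map. exists (subst_term s w). split. apply in_map; auto. apply st_subst; auto.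
Qed.

Fixpoint words {X} (k : nat) (L : list X) : list (list X) :=
  match k with 0 => [[]] | S k => flat_map (fun x => map (cons x) (words k L)) L end.
Lemma words_in {X} (L : list X) w : (forall u, In u w -> In u L) -> In w (words (length w) L).
Proof.
  induction w; simpl; intros H; auto. apply in_flat_map. exists a. split; auto.
  apply in_map. auto.
Qed.

Lemma fr P : (forall r, In r P -> rule_wf r) -> finitely_recursive P.
Proof.
  intros Hwf A _.
  set (L := flat_map subterms (aargs A)).
  exists (A :: flat_map (fun p => flat_map (fun k => map (mkAtom p) (words k L)) (seq 0 5)) (seq 0 5)).
  intros B HB.
  assert (Inv : forall u, In u (aargs B) -> In u L).
  { apply clos_rt_rtn1 in HB. induction HB.
    - intros u Hu. apply in_flat_map. exists u; split; auto using st_self.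
    - destruct (edge_info _ _ _ Hwf H) as [_ [_ H3]].
      intros u Hu. specialize (H3 u Hu). apply in_flat_map in H3. destruct H3 as [w [Hw H3]].
      specialize (IHHB w Hw). apply in_flat_map in IHHB. destruct IHHB as [a [Ha H4]].
      apply in_flat_map. exists a. split; auto. eapply st_trans; eauto. }
  apply clos_rt_rtn1 in HB. destruct HB as [|B' B Hedge _]. left; auto.
  right. destruct (edge_info _ _ _ Hwf Hedge) as [H1 [H2 _]].
  apply in_flat_map. exists (apred B). split. apply in_seq. lia.
  apply in_flat_map. exists (length (aargs B)). split. apply in_seq. lia.
  destruct B as [p args]. apply in_map. apply words_in. auto.
Qed.

Definition a0 := mkAtom 5 [].
Definition Ffalse := FAnd (FAtom a0) (FNot (FAtom a0)).

Lemma fixed_head r : In r Pfixed -> apred (rhead r) <> 4.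
Proof. intros Hr. simpl in Hr. repeat destruct Hr as [<-|Hr]; try contradiction; simpl; lia. Qed.

Lemma fixed_noneg r s B : In r Pfixed -> ~ In (Neg B) (rbody (subst_rule s r)).
Proof.
  intros Hr. simpl in Hr. repeat destruct Hr as [<-|Hr]; try contradiction; simpl;
  intros H; repeat destruct H as [H|H]; try discriminate; auto.
Qed.

Lemma neg_pred c n gr B : ground_rule_of (Pc c n) gr -> In (Neg B) (rbody gr) -> apred B = 4.
Proof.
  intros [r [s [Hr [_ ->]]]] HB. destruct Hr as [<-|Hr].
  - simpl in HB. destruct HB as [H|[H|[]]]; try discriminate. injection H; intros <-. reflexivity.
  - exfalso; eapply fixed_noneg; eauto.
Qed.



Lemma rp_inst c n s : subst_rule s (rp c n) =
  mkRule (Ap (node (encc c) (tcons (encn n) tnil) (s 0) (s 1)))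
    [Neg (Ap (node (encc c) (tcons (encn n) tnil) (s 0) (s 1))); Pos (Ad (node (encc c) (tcons (encn n) tnil) (s 0) (s 1)))].
Proof.
  unfold rp, rpT, rootT, subst_rule, subst_lit, subst_atom, Ap, Ad, node, tcons, tnil. simpl rhead. simpl rbody.
  simpl map. simpl apred. rewrite !subst_encc, !subst_encn. reflexivity.
Qed.

Theorem sem_equiv c n : (exists y, eval c [n] y) <-> FR_skeptical (Pc c n, Ffalse).
Proof.
  split.
  - intros [y Hy]. split; [|split].
    + apply fr. apply wf_all.
    + split; intros t [].
    + intros M HM. exfalso.
      destruct (compl c n M c [n] y Hy) as [K [HK HL]].
      set (q := Ap (node (encc c) (encl [n]) (encn y) K)).
      destruct (classic (M q)) as [Hq|Hq].
      * apply HM in Hq. apply (Hq (fun a => a <> q)); auto.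
        intros gr [r [s [Hr [Hs ->]]]] Hneg Hpos Heq.
        destruct Hr as [<-|Hr].
        -- rewrite rp_inst in Heq, Hneg. apply (Hneg q). simpl. left. cbn in Heq |- *. rewrite Heq. reflexivity.
           apply HM. exact Hq.
        -- apply (fixed_head r Hr). apply (f_equal apred) in Heq. simpl in Heq. rewrite <- Heq.
           destruct r; reflexivity.
      * apply Hq. apply HM.
        assert (E : rhead (subst_rule (sub [encn y; K]) (rp c n)) = q).
        { rewrite rp_inst. reflexivity. }
        rewrite <- E. apply der.
        -- left; reflexivity.
        -- apply sub_hu with (1 := syms_in c n). repeat constructor; auto.
           apply (hu_encn _ (syms_in c n)).
        -- rewrite rp_inst. intros B HB. simpl in HB. destruct HB as [HB|[HB|[]]]; try discriminate.
           injection HB; intros <-. exact Hq.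
        -- rewrite rp_inst. intros B HB. simpl in HB. destruct HB as [HB|[HB|[]]]; try discriminate.
           injection HB; intros <-. exact HL.
  - intros [_ [_ Hsk]]. apply NNPP. intros Hnh.
    set (M0 := fun _ : atom => False).
    set (M := LM (Pc c n) M0).
    assert (HM4 : forall a, M a -> apred a <> 4).
    { intros a Ha Ha4. apply Hnh. apply (Ha (Sgood c n) (sound c n M0)). auto. }
    assert (Hcl : forall S, reduct_closed (Pc c n) M S <-> reduct_closed (Pc c n) M0 S).
    { intros S; split; intros H gr Hgr _ Hp; apply H; auto; intros B HB HMB.
      apply (HM4 B HMB). eapply neg_pred; eauto. }
    assert (Hst : stable_model (Pc c n) M).
    { intros a. split.
      - intros Ha S HS. apply Ha. apply Hcl. auto.
      - intros Ha S HS. apply Ha. apply Hcl. auto. }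
    specialize (Hsk M Hst). simpl in Hsk. tauto.
Qed.

Fixpoint constM (k : nat) : mu_rec := match k with 0 => MZero | S k => MComp MSucc [constM k] end.
Lemma ev_const k v : eval (constM k) v k.
Proof.
  induction k; simpl. constructor.
  eapply ev_comp. constructor. exact IHk. constructor. constructor.
Qed.

Definition addM := MRec (MProj 0) (MComp MSucc [MProj 1]).
Lemma ev_add x w : eval addM (x :: w) (x + nth 0 w 0).
Proof.
  induction x.
  - constructor. constructor.
  - eapply ev_recS. exact IHx. eapply ev_comp. constructor. constructor. constructor. constructor.
Qed.

Fixpoint tri k := match k with 0 => 0 | S k => S k + tri k end.
Definition triM := MRec MZero (MComp addM [MComp MSucc [MProj 0]; MProj 1]).
Lemma ev_tri x w : eval triM (x :: w) (tri x).
Proof.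
  induction x.
  - constructor. constructor.
  - eapply ev_recS. exact IHx. eapply ev_comp.
    + constructor. eapply ev_comp. constructor. constructor. constructor. constructor.
      constructor. constructor. constructor.
    + apply ev_add.
Qed.

Lemma tri_eq k : tri k = k * (k + 1) / 2.
Proof.
  assert (H : k * (k + 1) = tri k * 2) by (induction k; simpl; lia).
  rewrite H. rewrite Nat.div_mul; lia.
Qed.

Definition cpairM := MComp addM [MComp triM [MComp addM [MProj 0; MProj 1]]; MProj 1].
Lemma ev_cpair x y : eval cpairM [x; y] (cpair x y).
Proof.
  unfold cpair. rewrite <- tri_eq. eapply ev_comp.
  - constructor. eapply ev_comp. constructor. eapply ev_comp.
    constructor. constructor. constructor. constructor. constructor.
    apply (ev_add x [y]). constructor. apply ev_tri. constructor. constructor. constructor.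
  - apply (ev_add _ [y]).
Qed.

Definition pairM a b := MComp cpairM [a; b].
Lemma ev_pair v a b x y : eval a v x -> eval b v y -> eval (pairM a b) v (cpair x y).
Proof. intros. eapply ev_comp. constructor; eauto. constructor; eauto. constructor. apply ev_cpair. Qed.
Definition succM a := MComp MSucc [a].
Lemma ev_succM v a x : eval a v x -> eval (succM a) v (S x).
Proof. intros. eapply ev_comp. constructor; eauto. constructor. constructor. Qed.

Definition enM := MRec (constM (enc_term tz))
  (pairM (constM 1) (pairM (constM 1) (succM (pairM (MProj 1) (constM 0))))).
Lemma ev_en n w : eval enM (n :: w) (enc_term (encn n)).
Proof.
  induction n.
  - constructor. apply ev_const.
  - eapply ev_recS. exact IHn.
    apply ev_pair. apply ev_const. apply ev_pair. apply ev_const. apply ev_succM.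
    apply ev_pair. constructor. apply ev_const.
Qed.

Section ListM.
Variable X : Type.
Variable h : X -> mu_rec.
Fixpoint listM (l : list X) : mu_rec :=
  match l with [] => constM 0 | x :: l' => succM (pairM (h x) (listM l')) end.
End ListM.
Arguments listM {X} h l.

Lemma ev_listM {X} (h : X -> mu_rec) (g : X -> nat) l v :
  (forall x, In x l -> eval (h x) v (g x)) -> eval (listM h l) v (enc_list (map g l)).
Proof.
  induction l; intros H; simpl. constructor.
  apply ev_succM. apply ev_pair. apply H; simpl; auto. apply IHl. intros; apply H; simpl; auto.
Qed.

Fixpoint compT (t : term) : mu_rec :=
  match t with
  | Var x => if Nat.eqb x 99 then enM else constM (cpair 0 x)
  | Fun f ts => pairM (constM 1) (pairM (constM f) (listM compT ts))
  end.

Lemma ev_compT t n w : eval (compT t) (n :: w) (enc_term (subst_term (sig n) t)).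
Proof.
  induction t using term_ind'.
  - simpl. unfold sig. destruct (Nat.eqb x 99). apply ev_en. apply ev_const.
  - cbn [compT subst_term enc_term]. apply ev_pair. apply (ev_const 1). apply ev_pair. apply ev_const.
    rewrite map_map. apply ev_listM. rewrite Forall_forall in H. auto.
Qed.

Definition compA (a : atom) := pairM (constM (apred a)) (listM compT (aargs a)).
Lemma ev_compA a n w : eval (compA a) (n :: w) (enc_atom (subst_atom (sig n) a)).
Proof.
  unfold compA, enc_atom, subst_atom; simpl. apply ev_pair. apply ev_const.
  rewrite map_map. apply ev_listM. intros; apply ev_compT.
Qed.
Definition compLit (l : literal) :=
  match l with Pos a => pairM (constM 0) (compA a) | Neg a => pairM (constM 1) (compA a) end.
Lemma ev_compLit l n w : eval (compLit l) (n :: w) (enc_lit (subst_lit (sig n) l)).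
Proof. destruct l; cbn [compLit subst_lit enc_lit]; apply ev_pair.
  apply (ev_const 0). apply ev_compA. apply (ev_const 1). apply ev_compA. Qed.
Definition compR (r : rule) := pairM (compA (rhead r)) (listM compLit (rbody r)).
Lemma ev_compR r n w : eval (compR r) (n :: w) (enc_rule (subst_rule (sig n) r)).
Proof.
  unfold compR, enc_rule, subst_rule; simpl. apply ev_pair. apply ev_compA.
  rewrite map_map. apply ev_listM. intros; apply ev_compLit.
Qed.

Definition finalM c := MComp cpairM [listM compR (P0 c); constM (enc_formula Ffalse)].
Lemma ev_final c n : eval (finalM c) [n] (enc_instance (prog c n, Ffalse)).
Proof.
  eapply ev_comp. constructor. 2: constructor. 3: constructor.
  - apply ev_listM with (g := fun r => enc_rule (subst_rule (sig n) r)). intros; apply ev_compR.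
  - apply ev_const.
  - unfold enc_instance, enc_program, prog. cbn [fst snd]. rewrite map_map. apply ev_cpair.
Qed.

Theorem theorem5p5 :
  forall A : nat -> Prop, re_set A -> many_one_reducible A FR_skeptical.
Proof.
  intros A [c HA]. exists (fun n => (prog c n, Ffalse)). split.
  - exists (finalM c). apply ev_final.
  - intros n. rewrite HA. unfold fst. rewrite prog_eq. apply sem_equiv.
Qed.
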